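(* For every integer $i\ge1$, as $n\to\infty$, in probability, $$\frac{\#\{w\in W_n:\ s_n(w)=i\}}{nk}\to x_i:=(1+\alpha)\Gamma(2+\alpha)\frac{\Gamma(i)}{\Gamma(2+\alpha+i)} ,$$ where $\alpha=k/\lambda$.
   Context: Preferred attachment affiliation model. Fix a real $\lambda>0$, an integer $k\ge 1$ and an integer $l\ge 0$ with $\lambda\le k+l$. At time $0$ a library contains books $w_1,\dots,w_l$, each with score $1$. For $n=0,1,2,\dots$, step $n+1$ proceeds as follows: $k$ new books $w_{l+nk+1},\dots,w_{l+(n+1)k}$ arrive, each with score $1$; then a customer $v_{n+1}$ arrives and, conditionally on the past and independently over books, downloads each book $w\in W_{n+1}=\{w_1,\dots,w_{l+(n+1)k}\}$ with probability $p_{n+1,s(w)}=\lambda s(w)/(l+(n+1)k+n\lambda)$, where $s(w)$ is the current score of $w$. Every book downloaded by $v_{n+1}$ then has its score increased by $1$. $W_n=\{w_1,\dots,w_{l+nk}\}$ and $s_n(w)$ denotes the score of $w$ after step $n$. *)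

(* Defs.v *)
From Stdlib Require Import Reals List Arith.
Import ListNotations.
Open Scope R_scope.

(* A finite (sub)probability distribution on states, as a list of
   (state, weight) pairs; duplicates allowed.  A state is the list of
   current scores of the books w_1, w_2, ... (in arrival order). *)
Definition distr := list (list nat * R).

(* One customer visit: each book with score x is downloaded independently
   with probability lam * x / denom (and its score increases by one). *)
Fixpoint visit (lam denom : R) (s : list nat) : distr :=
  match s with
  | nil => [(nil, 1)]
  | x :: t =>
      let p := lam * INR x / denom in
      flat_map (fun '(t', q) => [(S x :: t', p * q); (x :: t', (1 - p) * q)])
               (visit lam denom t)
  end.

(* Law of the score vector after step n (i.e. of (s_n(w))_{w in W_n}). *)
Fixpoint paa_dist (lam : R) (k l : nat) (n : nat) : distr :=
  match n with
  | O => [(repeat 1%nat l, 1)]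
  | S m =>
      (* step m+1: k new books of score 1 arrive, then customer v_{m+1}
         downloads w with prob lam*s(w)/(l+(m+1)k+m*lam) *)
      flat_map (fun '(s, q) =>
                  map (fun '(s', r) => (s', q * r))
                      (visit lam (INR (l + (S m) * k) + INR m * lam)
                             (s ++ repeat 1%nat k)))
               (paa_dist lam k l m)
  end.

Definition paa_prob (lam : R) (k l n : nat) (E : list nat -> bool) : R :=
  fold_right Rplus 0
    (map (fun '(s, q) => if E s then q else 0) (paa_dist lam k l n)).

Definition num_score (s : list nat) (i : nat) : nat :=
  count_occ Nat.eq_dec s i.

(* Gamma(2+a) * Gamma(i) / Gamma(2+a+i) for an integer i >= 1, written via
   Gamma(2+a+i) = Gamma(2+a) * prod_{j=0}^{i-1} (2+a+j) and Gamma(i) = (i-1)!.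
   (Stdlib has no Gamma function.) *)
Fixpoint poch (a : R) (i : nat) : R :=
  match i with
  | O => 1
  | S j => poch a j * (a + INR j)
  end.

Definition gamma_ratio (alpha : R) (i : nat) : R :=
  INR (fact (i - 1)) / poch (2 + alpha) i.

Definition x_lim (alpha : R) (i : nat) : R := (1 + alpha) * gamma_ratio alpha i.

(* Main.v *)
Require Import Defs.
From Stdlib Require Import Reals List Arith Lra Lia.
Import ListNotations.
Open Scope R_scope.

Definition Ex (d : distr) (f : list nat -> R) : R :=
  fold_right Rplus 0 (map (fun sq => snd sq * f (fst sq)) d).

Lemma Ex_nil f : Ex nil f = 0.
Proof. reflexivity. Qed.

Lemma Ex_cons s q d f : Ex ((s,q)::d) f = q * f s + Ex d f.
Proof. reflexivity. Qed.

Lemma Ex_app d1 d2 f : Ex (d1 ++ d2) f = Ex d1 f + Ex d2 f.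
Proof.
  induction d1 as [|[s q] d1 IH]; [unfold Ex; simpl; ring|].
  rewrite <- app_comm_cons, !Ex_cons, IH; ring.
Qed.

Lemma Ex_ext d f g : (forall s, f s = g s) -> Ex d f = Ex d g.
Proof.
  intros H; induction d as [|[s q] d IH]; [reflexivity|].
  rewrite !Ex_cons, IH, H; reflexivity.
Qed.

Lemma Ex_plus d f g : Ex d (fun s => f s + g s) = Ex d f + Ex d g.
Proof.
  induction d as [|[s q] d IH]; [simpl; unfold Ex; simpl; lra|].
  rewrite !Ex_cons, IH; ring.
Qed.

Lemma Ex_scal d c f : Ex d (fun s => c * f s) = c * Ex d f.
Proof.
  induction d as [|[s q] d IH]; [unfold Ex; simpl; lra|].
  rewrite !Ex_cons, IH; ring.
Qed.

Definition mass d := Ex d (fun _ => 1).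

Lemma Ex_const d c : Ex d (fun _ => c) = c * mass d.
Proof. unfold mass. rewrite <- Ex_scal. apply Ex_ext. intros; ring. Qed.

Lemma Ex_mono d f g :
  (forall s q, In (s,q) d -> 0 <= q /\ f s <= g s) -> Ex d f <= Ex d g.
Proof.
  induction d as [|[s q] d IH]; intros H; [unfold Ex; simpl; lra|].
  rewrite !Ex_cons. destruct (H s q (or_introl eq_refl)) as [H1 H2].
  assert (Ex d f <= Ex d g) by (apply IH; intros; apply H; right; auto).
  assert (q * f s <= q * g s) by (apply Rmult_le_compat_l; auto). lra.
Qed.

Lemma Ex_nonneg d f :
  (forall s q, In (s,q) d -> 0 <= q /\ 0 <= f s) -> 0 <= Ex d f.
Proof.
  intros H. replace 0 with (Ex d (fun _ => 0)).
  - apply Ex_mono. intros s q Hi; apply H in Hi; lra.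
  - rewrite Ex_const; ring.
Qed.

Definition pp (lam D : R) (x : nat) : R := lam * INR x / D.

Lemma Ex_visit_cons lam D x t f :
  Ex (visit lam D (x :: t)) f =
  Ex (visit lam D t) (fun t' => pp lam D x * f (S x :: t') + (1 - pp lam D x) * f (x :: t')).
Proof.
  simpl. generalize (visit lam D t). intro d.
  induction d as [|[s q] d IH]; [reflexivity|].
  simpl flat_map. rewrite !Ex_cons, IH. unfold pp. ring.
Qed.

Lemma mass_visit lam D s : mass (visit lam D s) = 1.
Proof.
  unfold mass. induction s as [|x t IH]; [unfold Ex; simpl; ring|].
  rewrite Ex_visit_cons. transitivity (Ex (visit lam D t) (fun _ => 1)); [|exact IH].
  apply Ex_ext; intros; ring.
Qed.

Definition Nr (j : nat) (s : list nat) : R := INR (num_score s j).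

Definition indb (b : bool) : R := if b then 1 else 0.

Lemma Nr_cons j x t : Nr j (x :: t) = indb (Nat.eqb x j) + Nr j t.
Proof.
  unfold Nr, num_score; simpl. destruct (Nat.eq_dec x j) as [e|e].
  - subst. rewrite Nat.eqb_refl. rewrite S_INR. unfold indb; ring.
  - apply Nat.eqb_neq in e. rewrite e. unfold indb; ring.
Qed.

Definition hmean lam D j x :=
  pp lam D x * indb (Nat.eqb (S x) j) + (1 - pp lam D x) * indb (Nat.eqb x j).

Fixpoint sumL (g : nat -> R) (s : list nat) : R :=
  match s with nil => 0 | x :: t => g x + sumL g t end.

Lemma Ex_visit_Nr lam D j s :
  Ex (visit lam D s) (Nr j) = sumL (hmean lam D j) s.
Proof.
  induction s as [|x t IH]; [unfold Ex, Nr; simpl; ring|].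
  rewrite Ex_visit_cons. simpl sumL. rewrite <- IH.
  transitivity (Ex (visit lam D t) (fun t' => hmean lam D j x * 1 + Nr j t')).
  - apply Ex_ext; intros; rewrite !Nr_cons; unfold hmean; simpl; ring.
  - rewrite Ex_plus, Ex_scal. fold (mass (visit lam D t)). rewrite mass_visit. ring.
Qed.

Definition hvar lam D j x :=
  pp lam D x * (1 - pp lam D x) * (indb (Nat.eqb (S x) j) - indb (Nat.eqb x j))^2.

Lemma Ex_visit_sq lam D j s : forall c,
  Ex (visit lam D s) (fun t => (Nr j t - c)^2) =
  (Ex (visit lam D s) (Nr j) - c)^2 + sumL (hvar lam D j) s.
Proof.
  induction s as [|x t IH]; intros c; [unfold Ex, Nr; simpl; ring|].
  rewrite !Ex_visit_cons. simpl sumL.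
  set (p := pp lam D x). set (z1 := indb (Nat.eqb (S x) j)). set (z0 := indb (Nat.eqb x j)).
  transitivity (Ex (visit lam D t) (fun t' =>
     p * (Nr j t' - (c - z1))^2 + (1-p) * (Nr j t' - (c - z0))^2)).
  { apply Ex_ext; intros; rewrite !Nr_cons; fold z1 z0; ring. }
  rewrite Ex_plus, !Ex_scal, !IH.
  assert (Hm : Ex (visit lam D t) (fun t' => p * Nr j (S x :: t') + (1 - p) * Nr j (x :: t'))
    = (p*z1 + (1-p)*z0) + Ex (visit lam D t) (Nr j)).
  { transitivity (Ex (visit lam D t) (fun t' => (p*z1 + (1-p)*z0) * 1 + Nr j t')).
    { apply Ex_ext; intros; rewrite !Nr_cons; fold z1 z0; ring. }
    rewrite Ex_plus, Ex_scal. fold (mass (visit lam D t)). rewrite mass_visit. ring. }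
  rewrite Hm. unfold hvar; fold p z1 z0. ring.
Qed.


Lemma sumL_hmean lam D j s :
  sumL (hmean lam D (S j)) s =
  (1 - lam * INR (S j) / D) * Nr (S j) s + lam * INR j / D * Nr j s.
Proof.
  induction s as [|x t IH]; [unfold Nr; simpl; ring|].
  simpl sumL. rewrite IH, !Nr_cons. unfold hmean, pp, indb.
  simpl Nat.eqb.
  destruct (Nat.eqb_spec x j); destruct (Nat.eqb_spec x (S j)); subst; try lia; unfold indb; ring.
Qed.

Lemma sumL_hvar lam D j s : 0 < lam -> 0 < D ->
  sumL (hvar lam D j) s <= INR (length s) * (lam * INR j / D).
Proof.
  intros Hl HD. induction s as [|x t IH]; [simpl; lra|].
  simpl sumL. simpl length. rewrite S_INR.
  assert (hvar lam D j x <= lam * INR j / D); [|lra].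
  unfold hvar, pp, indb.
  assert (0 <= lam * INR x / D) by (apply Rmult_le_pos; [apply Rmult_le_pos; [lra|apply pos_INR]|left; apply Rinv_0_lt_compat; lra]).
  assert (0 <= lam * INR j / D) by (apply Rmult_le_pos; [apply Rmult_le_pos; [lra|apply pos_INR]|left; apply Rinv_0_lt_compat; lra]).
  destruct (Nat.eqb_spec (S x) j); destruct (Nat.eqb_spec x j); subst; try lia.
  -
    assert (lam * INR x / D <= lam * INR (S x) / D).
    { unfold Rdiv. apply Rmult_le_compat_r; [left; apply Rinv_0_lt_compat; lra|].
      apply Rmult_le_compat_l; [lra|]. apply le_INR; lia. }
    set (p := lam * INR x / D) in *. nra.
  - set (p := lam * INR j / D) in *. nra.
  - nra.
Qed.

Definition Dn (lam : R) (k l m : nat) : R := INR (l + (S m) * k) + INR m * lam.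

Lemma Ex_paa_S lam k l m f :
  Ex (paa_dist lam k l (S m)) f =
  Ex (paa_dist lam k l m) (fun s => Ex (visit lam (Dn lam k l m) (s ++ repeat 1%nat k)) f).
Proof.
  simpl paa_dist. replace (INR (l + (k + m * k)) + INR m * lam) with (Dn lam k l m) by reflexivity.
  generalize (paa_dist lam k l m). intro d.
  induction d as [|[s q] d IH]; [reflexivity|].
  simpl flat_map. rewrite Ex_app, IH, Ex_cons. f_equal.
  generalize (visit lam (Dn lam k l m) (s ++ repeat 1%nat k)). intro e.
  induction e as [|[t r] e IHe]; [unfold Ex; simpl; ring|].
  simpl map. rewrite !Ex_cons, IHe. ring.
Qed.

Lemma mass_paa lam k l n : mass (paa_dist lam k l n) = 1.
Proof.
  induction n as [|m IH]; [unfold mass, Ex; simpl; ring|].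
  unfold mass in *. rewrite Ex_paa_S.
  transitivity (Ex (paa_dist lam k l m) (fun _ => 1)); [|exact IH].
  apply Ex_ext; intros; apply mass_visit.
Qed.

Lemma visit_inv lam D M s : 0 < lam -> 0 < D -> lam * INR M <= D ->
  (forall x, In x s -> (x <= M)%nat) ->
  forall t q, In (t, q) (visit lam D s) ->
    0 <= q /\ length t = length s /\ (forall y, In y t -> (y <= S M)%nat).
Proof.
  intros Hl HD HM. induction s as [|x s IH]; intros Hs t q Hin.
  - simpl in Hin. destruct Hin as [E|[]]. inversion E; subst. simpl; repeat split; try lra; intros y [].
  - simpl in Hin. apply in_flat_map in Hin. destruct Hin as [[t' q'] [Hin' H2]].
    destruct (IH (fun y Hy => Hs y (or_intror Hy)) t' q' Hin') as [Hq [Hlen Hy]].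
    assert (Hx : (x <= M)%nat) by (apply Hs; left; auto).
    assert (0 <= lam * INR x / D) by (apply Rmult_le_pos; [apply Rmult_le_pos; [lra|apply pos_INR]|left; apply Rinv_0_lt_compat; lra]).
    assert (lam * INR x / D <= 1).
    { apply (Rmult_le_reg_r D); [lra|]. unfold Rdiv. rewrite Rmult_assoc, Rinv_l; [|lra].
      apply Rle_trans with (lam * INR M); [|lra]. rewrite Rmult_1_r.
      apply Rmult_le_compat_l; [lra|apply le_INR; auto]. }
    simpl in H2. destruct H2 as [E|[E|[]]]; inversion E; subst; clear E.
    + repeat split; [apply Rmult_le_pos; lra| simpl; lia|].
      intros y [Ey|Ey]; [lia|apply Hy; auto].
    + repeat split; [apply Rmult_le_pos; lra| simpl; lia|].
      intros y [Ey|Ey]; [lia|apply Hy; auto].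
Qed.

Lemma paa_inv lam k l n : 0 < lam -> (1 <= k)%nat -> lam <= INR (k + l) ->
  forall s q, In (s, q) (paa_dist lam k l n) ->
    0 <= q /\ length s = (l + n * k)%nat /\ (forall y, In y s -> (y <= S n)%nat).
Proof.
  intros Hl Hk Hkl. induction n as [|m IH]; intros s q Hin.
  - simpl in Hin. destruct Hin as [E|[]]. inversion E; subst.
    repeat split; [lra| rewrite repeat_length; lia|].
    intros y Hy. apply repeat_spec in Hy. lia.
  - simpl in Hin. apply in_flat_map in Hin. destruct Hin as [[s0 q0] [Hin0 H2]].
    apply in_map_iff in H2. destruct H2 as [[t r] [E Ht]]. inversion E; subst; clear E.
    destruct (IH s0 q0 Hin0) as [Hq [Hlen Hy]].
    assert (HD : 0 < INR (l + S m * k) + INR m * lam).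
    { assert (0 < INR (l + S m * k)) by (apply lt_0_INR; lia).
      assert (0 <= INR m * lam) by (apply Rmult_le_pos; [apply pos_INR|lra]). lra. }
    assert (HM : lam * INR (S m) <= INR (l + S m * k) + INR m * lam).
    { rewrite S_INR. rewrite plus_INR in Hkl. rewrite plus_INR, mult_INR, S_INR.
      assert (INR 1 <= INR k) by (apply le_INR; auto). simpl in H.
      assert (0 <= INR m) by apply pos_INR. nra. }
    destruct (visit_inv lam _ (S m) (s0 ++ repeat 1%nat k) Hl HD HM) with (t := s) (q := r)
      as [Hr [Hl2 Hy2]]; auto.
    + intros x Hx. apply in_app_or in Hx. destruct Hx as [Hx|Hx]; [apply Hy; auto|].
      apply repeat_spec in Hx; lia.
    + repeat split.
      * apply Rmult_le_pos; auto.
      * rewrite Hl2, app_length, repeat_length, Hlen. lia.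
      * exact Hy2.
Qed.


Definition kap (k j : nat) : R := if Nat.eqb j 1 then INR k else 0.

Lemma Nr_app_rep j s k : Nr j (s ++ repeat 1%nat k) = Nr j s + kap k j.
Proof.
  unfold Nr, num_score, kap. rewrite count_occ_app, plus_INR. f_equal.
  destruct (Nat.eqb_spec j 1).
  - subst. rewrite count_occ_repeat_eq; auto.
  - rewrite count_occ_repeat_neq; auto.
Qed.

Definition ee lam k l j n := Ex (paa_dist lam k l n) (Nr j).
Definition aa lam k l n j := 1 - lam * INR j / Dn lam k l n.
Definition bb lam k l n j := lam * INR (j - 1) / Dn lam k l n.

Lemma visit_mean lam k l n j s :
  Ex (visit lam (Dn lam k l n) (s ++ repeat 1%nat k)) (Nr (S j)) =
  aa lam k l n (S j) * (Nr (S j) s + kap k (S j)) + bb lam k l n (S j) * (Nr j s + kap k j).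
Proof.
  rewrite Ex_visit_Nr, sumL_hmean, !Nr_app_rep. unfold aa, bb.
  replace (S j - 1)%nat with j by lia. reflexivity.
Qed.

Lemma ee_rec lam k l n j :
  ee lam k l (S j) (S n) =
  aa lam k l n (S j) * (ee lam k l (S j) n + kap k (S j)) +
  bb lam k l n (S j) * (ee lam k l j n + kap k j).
Proof.
  unfold ee. rewrite Ex_paa_S.
  rewrite (Ex_ext _ _ _ (visit_mean lam k l n j)).
  set (A := aa lam k l n (S j)). set (B := bb lam k l n (S j)).
  transitivity (Ex (paa_dist lam k l n) (fun s =>
     A * Nr (S j) s + (B * Nr j s + (A * kap k (S j) + B * kap k j) * 1))).
  { apply Ex_ext; intros; ring. }
  rewrite Ex_plus, Ex_scal, Ex_plus, Ex_scal, Ex_scal.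
  fold (mass (paa_dist lam k l n)). rewrite mass_paa. ring.
Qed.

Fixpoint sum1 (f : nat -> R) (i : nat) : R :=
  match i with O => 0 | S j => sum1 f j + f (S j) end.

Lemma sum1_nonneg f i : (forall j, 0 <= f j) -> 0 <= sum1 f i.
Proof. intros H; induction i; simpl; [lra|]. specialize (H (S i)). lra. Qed.

Lemma sum1_le f g i : (forall j, (1 <= j <= i)%nat -> f j <= g j) -> sum1 f i <= sum1 g i.
Proof.
  induction i; intros H; simpl; [lra|].
  assert (sum1 f i <= sum1 g i) by (apply IHi; intros; apply H; lia).
  assert (f (S i) <= g (S i)) by (apply H; lia). lra.
Qed.

Lemma sum1_plus f g i : sum1 (fun j => f j + g j) i = sum1 f i + sum1 g i.
Proof. induction i; simpl; [ring|]. rewrite IHi; ring. Qed.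

Lemma sum1_const c i : sum1 (fun _ => c) i = INR i * c.
Proof. induction i; simpl sum1; [simpl; ring|]. rewrite IHi, S_INR; ring. Qed.

Lemma Ex_sum1 d f i : Ex d (fun s => sum1 (fun j => f j s) i) = sum1 (fun j => Ex d (f j)) i.
Proof.
  induction i; simpl.
  - rewrite Ex_const; ring.
  - rewrite Ex_plus, IHi. reflexivity.
Qed.

Lemma cs2 a b x y : 0 <= a -> 0 <= b -> a + b <= 1 -> (a*x + b*y)^2 <= a*x^2 + b*y^2.
Proof.
  intros. assert (0 <= a*b*(x-y)^2) by (apply Rmult_le_pos; [apply Rmult_le_pos; lra|apply pow2_ge_0]).
  assert (0 <= a*x^2) by (apply Rmult_le_pos; [lra|apply pow2_ge_0]).
  assert (0 <= b*y^2) by (apply Rmult_le_pos; [lra|apply pow2_ge_0]).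
  assert (0 <= (1 - (a+b)) * (a*x^2 + b*y^2)) by (apply Rmult_le_pos; lra).
  replace ((a*x + b*y)^2) with ((a+b)*(a*x^2+b*y^2) - a*b*(x-y)^2) by ring. nra.
Qed.

Lemma contr (a b X : nat -> R) i :
  (forall j, (1 <= j <= S i)%nat -> 0 <= a j <= 1 /\ 0 <= b j /\ a j + b j <= 1) ->
  (forall j, (1 <= j)%nat -> (j < S i)%nat -> a j + b (S j) = 1) -> b 1%nat = 0 ->
  sum1 (fun j => (a j * X j + b j * X (j-1)%nat)^2) (S i) <=
  sum1 (fun j => X j ^ 2) i + a (S i) * X (S i) ^ 2.
Proof.
  intros H1 H2 Hb. induction i.
  - simpl. rewrite Hb. destruct (H1 1%nat) as [[Ha Ha'] _]; [lia|].
    assert (0 <= a 1%nat * (1 - a 1%nat) * X 1%nat ^ 2) by (apply Rmult_le_pos; [apply Rmult_le_pos; lra|apply pow2_ge_0]).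
    simpl in H. nra.
  - change (sum1 (fun j => (a j * X j + b j * X (j-1)%nat)^2) (S (S i))) with
      (sum1 (fun j => (a j * X j + b j * X (j-1)%nat)^2) (S i) +
        (a (S (S i)) * X (S (S i)) + b (S (S i)) * X (S (S i) - 1)%nat)^2).
    replace (S (S i) - 1)%nat with (S i) by lia.
    assert (IH : sum1 (fun j => (a j * X j + b j * X (j-1)%nat)^2) (S i) <=
      sum1 (fun j => X j ^ 2) i + a (S i) * X (S i) ^ 2).
    { apply IHi; intros; [apply H1; lia|apply H2; lia]. }
    destruct (H1 (S (S i))) as [[Ha Ha'] [Hb' Hab]]; [lia|].
    pose proof (cs2 _ _ (X (S (S i))) (X (S i)) Ha Hb' Hab).
    pose proof (H2 (S i) ltac:(lia) ltac:(lia)).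
    assert (E : a (S i) * X (S i) ^ 2 + b (S (S i)) * X (S i) ^ 2 = X (S i) ^ 2).
    { rewrite <- Rmult_plus_distr_r, H0; ring. }
    change (sum1 (fun j => X j ^ 2) (S i)) with (sum1 (fun j => X j ^ 2) i + X (S i) ^ 2).
    lra.
Qed.


Definition sq lam k l i n s := sum1 (fun j => (Nr j s - ee lam k l j n)^2) i.
Definition QQ lam k l i n := Ex (paa_dist lam k l n) (sq lam k l i n).

Lemma Dn_pos lam k l n : 0 < lam -> (1 <= k)%nat -> 0 < Dn lam k l n.
Proof.
  intros. unfold Dn. assert (0 < INR (l + S n * k)) by (apply lt_0_INR; lia).
  assert (0 <= INR n * lam) by (apply Rmult_le_pos; [apply pos_INR|lra]). lra.
Qed.

Lemma frac_le L D c : 0 < D -> 0 <= L -> L <= D -> 0 <= c -> L * (c / D) <= c.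
Proof.
  intros HD HL HLD Hc. apply (Rmult_le_reg_r D); [lra|].
  unfold Rdiv. replace (L * (c * / D) * D) with (L * c * (/ D * D)) by ring.
  rewrite Rinv_l; [|lra]. nra.
Qed.

Lemma QQ_step lam k l i n : 0 < lam -> (1 <= k)%nat -> lam <= INR (k + l) -> (1 <= i)%nat ->
  lam * INR i <= Dn lam k l n ->
  QQ lam k l i (S n) <= QQ lam k l i n + lam * INR i * INR i.
Proof.
  intros Hl Hk Hkl Hi HiD.
  pose proof (Dn_pos lam k l n Hl Hk) as HD.
  unfold QQ. rewrite Ex_paa_S.
  replace (Ex (paa_dist lam k l n) (sq lam k l i n) + lam * INR i * INR i) with
    (Ex (paa_dist lam k l n) (fun s => sq lam k l i n s + lam * INR i * INR i)).
  2:{ rewrite Ex_plus, Ex_const, mass_paa; ring. }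
  apply Ex_mono. intros s q Hin.
  destruct (paa_inv lam k l n Hl Hk Hkl s q Hin) as [Hq [Hlen _]].
  split; [exact Hq|].
  unfold sq at 1. rewrite Ex_sum1.
  set (X := fun j => Nr j s - ee lam k l j n).
  assert (Hlen' : INR (length (s ++ repeat 1%nat k)) <= Dn lam k l n).
  { rewrite length_app, repeat_length, Hlen. unfold Dn.
    replace (l + n * k + k)%nat with (l + S n * k)%nat by lia.
    assert (0 <= INR n * lam) by (apply Rmult_le_pos; [apply pos_INR|lra]). lra. }
  apply Rle_trans with
    (sum1 (fun j => (aa lam k l n j * X j + bb lam k l n j * X (j-1)%nat)^2) i +
     sum1 (fun _ => lam * INR i) i).
  { rewrite <- sum1_plus. apply sum1_le. intros j Hj.
    destruct j as [|j]; [lia|].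
    rewrite Ex_visit_sq.
    rewrite visit_mean. rewrite ee_rec.
    apply Rplus_le_compat.
    - unfold X. replace (S j - 1)%nat with j by lia. right; ring.
    - eapply Rle_trans; [apply sumL_hvar; auto|].
      eapply Rle_trans; [apply frac_le; auto|].
      + apply pos_INR.
      + apply Rmult_le_pos; [lra|apply pos_INR].
      + apply Rmult_le_compat_l; [lra|apply le_INR; lia]. }
  rewrite sum1_const.
  destruct i as [|i]; [lia|].
  apply Rplus_le_compat; [|right; ring].
  eapply Rle_trans; [apply contr|].
  - intros j Hj. unfold aa, bb.
    assert (0 <= lam * INR j / Dn lam k l n) by
      (apply Rmult_le_pos; [apply Rmult_le_pos; [lra|apply pos_INR]|left; apply Rinv_0_lt_compat; lra]).
    assert (0 <= lam * INR (j-1) / Dn lam k l n) by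
      (apply Rmult_le_pos; [apply Rmult_le_pos; [lra|apply pos_INR]|left; apply Rinv_0_lt_compat; lra]).
    assert (lam * INR j / Dn lam k l n <= 1).
    { apply Rle_trans with (1 * (1 / Dn lam k l n) * (lam * INR j)); [right; field; lra|].
      rewrite Rmult_1_l. rewrite Rmult_comm.
      apply frac_le; try lra.
      - apply Rmult_le_pos; [lra|apply pos_INR].
      - apply Rle_trans with (lam * INR (S i)); [|lra].
        apply Rmult_le_compat_l; [lra|apply le_INR; lia]. }
    assert (lam * INR (j-1) / Dn lam k l n <= lam * INR j / Dn lam k l n).
    { unfold Rdiv. apply Rmult_le_compat_r; [left; apply Rinv_0_lt_compat; lra|].
      apply Rmult_le_compat_l; [lra|apply le_INR; lia]. }
    lra.
  - intros j Hj1 Hj2. unfold aa, bb. replace (S j - 1)%nat with j by lia. field. lra.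
  - unfold bb. simpl. unfold Rdiv. ring.
  - unfold sq. simpl sum1. unfold X.
    assert (0 <= lam * INR (S i) / Dn lam k l n) by
      (apply Rmult_le_pos; [apply Rmult_le_pos; [lra|apply pos_INR]|left; apply Rinv_0_lt_compat; lra]).
    assert (0 <= (Nr (S i) s - ee lam k l (S i) n) ^ 2) by apply pow2_ge_0.
    unfold aa. nra.
Qed.


Lemma cv_const c : Un_cv (fun _ => c) c.
Proof. intros e He. exists 0%nat. intros. unfold R_dist. rewrite Rminus_diag, Rabs_R0. lra. Qed.

Lemma cv_ext_ev u v l N : (forall n, (n >= N)%nat -> u n = v n) -> Un_cv u l -> Un_cv v l.
Proof.
  intros H Hu e He. destruct (Hu e He) as [M HM]. exists (max N M). intros n Hn.
  rewrite <- H by lia. apply HM; lia.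
Qed.

Lemma cv_inv_lin a b : 0 < a -> 0 < b -> Un_cv (fun n => 1 / (a * INR n + b)) 0.
Proof.
  intros Ha Hb e He. destruct (INR_archimed (a * e) 1) as [N HN]; [nra|].
  exists N. intros n Hn. unfold R_dist. rewrite Rminus_0_r.
  assert (HN' : INR N <= INR n) by (apply le_INR; lia).
  assert (0 <= INR N) by apply pos_INR.
  assert (Hp : 0 < a * INR n + b) by nra.
  rewrite Rabs_right.
  2:{ left. unfold Rdiv. rewrite Rmult_1_l. apply Rinv_0_lt_compat; auto. }
  apply (Rmult_lt_reg_r (a * INR n + b)); auto. unfold Rdiv. rewrite Rmult_1_l, Rinv_l; [|lra].
  assert (a*e*INR N <= a*e*INR n) by (apply Rmult_le_compat_l; nra).
  assert (0 < e * b) by nra. nra.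
Qed.

Lemma cesaro_abs (v e : nat -> R) N :
  (forall n, (n >= N)%nat -> Rabs (v (S n)) <= Rabs (v n) + Rabs (e n)) ->
  Un_cv e 0 -> Un_cv (fun n => v n / INR n) 0.
Proof.
  intros Hv He d Hd.
  destruct (He (d/2)) as [M1 HM1]; [lra|].
  set (M := max N M1).
  assert (Hstep : forall j, Rabs (v (M + j)%nat) <= Rabs (v M) + INR j * (d/2)).
  { induction j.
    - rewrite Nat.add_0_r. simpl. lra.
    - replace (M + S j)%nat with (S (M + j)) by lia.
      eapply Rle_trans; [apply Hv; unfold M; lia|].
      assert (Rabs (e (M + j)%nat) < d/2).
      { specialize (HM1 (M + j)%nat ltac:(unfold M; lia)). unfold R_dist in HM1.
        rewrite Rminus_0_r in HM1. exact HM1. }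
      rewrite S_INR. lra. }
  destruct (INR_archimed (d/2) (Rabs (v M))) as [N2 HN2]; [lra|].
  exists (max (S M) N2). intros n Hn. unfold R_dist. rewrite Rminus_0_r.
  assert (Hn0 : 0 < INR n) by (apply lt_0_INR; lia).
  assert (HnN2 : INR N2 <= INR n) by (apply le_INR; lia).
  specialize (Hstep (n - M)%nat). replace (M + (n - M))%nat with n in Hstep by lia.
  assert (INR (n - M) <= INR n) by (apply le_INR; lia).
  unfold Rdiv. rewrite Rabs_mult, (Rabs_right (/ INR n)).
  2:{ left; apply Rinv_0_lt_compat; auto. }
  apply (Rmult_lt_reg_r (INR n)); auto. rewrite Rmult_assoc, Rinv_l; [|lra].
  assert (0 <= Rabs (v M)) by apply Rabs_pos.
  nra.
Qed.

Lemma asym (u A B : nat -> R) Ainf Binf N :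
  (forall n, (n >= N)%nat -> u (S n) = u n + A n - B n * u n) ->
  (forall n, (n >= N)%nat -> 0 <= B n <= 1) ->
  Un_cv A Ainf -> Un_cv (fun n => INR n * B n) Binf -> 0 <= Binf ->
  Un_cv (fun n => u n / INR n) (Ainf / (1 + Binf)).
Proof.
  intros Hrec HB HA HnB HBi.
  set (c := Ainf / (1 + Binf)).
  set (v := fun n => u n - c * INR n).
  set (e := fun n => A n - c - c * (INR n * B n)).
  assert (He : Un_cv e 0).
  { replace 0 with (Ainf - c - c * Binf) by (unfold c; field; lra).
    apply CV_minus; [apply CV_minus; [exact HA|apply cv_const]|].
    apply CV_mult; [apply cv_const|exact HnB]. }
  assert (Hv : Un_cv (fun n => v n / INR n) 0).
  { apply (cesaro_abs v e N); auto.
    intros n Hn. specialize (Hrec n Hn). specialize (HB n Hn).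
    assert (E : v (S n) = (1 - B n) * v n + e n).
    { unfold v, e. rewrite Hrec, S_INR. ring. }
    rewrite E. eapply Rle_trans; [apply Rabs_triang|].
    rewrite Rabs_mult. apply Rplus_le_compat_r.
    rewrite (Rabs_right (1 - B n)) by lra.
    assert (0 <= Rabs (v n)) by apply Rabs_pos. nra. }
  assert (Hc : Un_cv (fun n => v n / INR n + c) (0 + c)) by (apply CV_plus; [exact Hv|apply cv_const]).
  rewrite Rplus_0_l in Hc.
  apply (cv_ext_ev (fun n => v n / INR n + c) _ _ 1%nat); [|exact Hc].
  intros n Hn. unfold v. field. apply not_0_INR; lia.
Qed.


Lemma Dn_form lam k l n : Dn lam k l n = (INR k + lam) * INR n + (INR l + INR k).
Proof. unfold Dn. rewrite plus_INR, mult_INR, S_INR. ring. Qed.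

Lemma cv_invD lam k l : 0 < lam -> (1 <= k)%nat -> Un_cv (fun n => 1 / Dn lam k l n) 0.
Proof.
  intros Hl Hk.
  assert (Hk' : 1 <= INR k) by (change 1 with (INR 1); apply le_INR; auto).
  assert (0 <= INR l) by apply pos_INR.
  apply (cv_ext_ev (fun n => 1 / ((INR k + lam) * INR n + (INR l + INR k))) _ _ 0%nat).
  - intros n _. rewrite Dn_form. reflexivity.
  - apply cv_inv_lin; lra.
Qed.

Lemma cv_nD lam k l : 0 < lam -> (1 <= k)%nat ->
  Un_cv (fun n => INR n / Dn lam k l n) (1 / (INR k + lam)).
Proof.
  intros Hl Hk.
  assert (Hk' : 1 <= INR k) by (change 1 with (INR 1); apply le_INR; auto).
  assert (0 <= INR l) by apply pos_INR.
  assert (HH : Un_cv (fun n => 1 / (INR k + lam) - (INR l + INR k) / (INR k + lam) * (1 / Dn lam k l n))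
     (1 / (INR k + lam) - (INR l + INR k) / (INR k + lam) * 0)).
  { apply CV_minus; [apply cv_const|]. apply CV_mult; [apply cv_const|apply cv_invD; auto]. }
  rewrite Rmult_0_r, Rminus_0_r in HH.
  refine (cv_ext_ev _ _ _ 0%nat _ HH).
  intros n _. pose proof (Dn_pos lam k l n Hl Hk). rewrite Dn_form in *. field. lra.
Qed.

Lemma poch_pos a n : 0 < a -> 0 < poch a n.
Proof.
  intros Ha. induction n; simpl; [lra|].
  apply Rmult_lt_0_compat; auto. pose proof (pos_INR n). lra.
Qed.

Lemma x_lim_rec al m : 0 < al ->
  x_lim al (S (S m)) = x_lim al (S m) * INR (S m) / (2 + al + INR (S m)).
Proof.
  intros Ha. unfold x_lim, gamma_ratio.
  replace (S (S m) - 1)%nat with (S m) by lia. replace (S m - 1)%nat with m by lia.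
  change (poch (2 + al) (S (S m))) with (poch (2 + al) (S m) * (2 + al + INR (S m))).
  change (fact (S m)) with (S m * fact m)%nat. rewrite mult_INR.
  pose proof (poch_pos (2 + al) (S m) ltac:(lra)).
  pose proof (pos_INR (S m)). field. lra.
Qed.

Lemma cv_eq u l l' : Un_cv u l -> l = l' -> Un_cv u l'.
Proof. intros H E; subst; auto. Qed.

Lemma B_bounds lam k l j : 0 < lam -> (1 <= k)%nat ->
  exists N0, forall n, (n >= N0)%nat -> 0 <= lam * INR j / Dn lam k l n <= 1.
Proof.
  intros Hl Hk.
  assert (Hk' : 1 <= INR k) by (change 1 with (INR 1); apply le_INR; auto).
  destruct (INR_archimed 1 (lam * INR j)) as [N0 HN0]; [lra|].
  exists N0. intros n Hn. pose proof (Dn_pos lam k l n Hl Hk) as HD.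
  assert (INR N0 <= INR n) by (apply le_INR; lia).
  assert (lam * INR j <= Dn lam k l n).
  { rewrite Dn_form. pose proof (pos_INR n). pose proof (pos_INR l). nra. }
  pose proof (pos_INR j).
  split.
  - apply Rmult_le_pos; [nra|left; apply Rinv_0_lt_compat; lra].
  - apply (Rmult_le_reg_r (Dn lam k l n)); auto. unfold Rdiv.
    rewrite Rmult_assoc, Rinv_l; lra.
Qed.

Lemma cv_nB lam k l j : 0 < lam -> (1 <= k)%nat ->
  Un_cv (fun n => INR n * (lam * INR j / Dn lam k l n)) (lam * INR j / (INR k + lam)).
Proof.
  intros Hl Hk.
  assert (HH : Un_cv (fun n => (lam * INR j) * (INR n / Dn lam k l n)) ((lam * INR j) * (1 / (INR k + lam))))
    by (apply CV_mult; [apply cv_const|apply cv_nD; auto]).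
  assert (Hk' : 1 <= INR k) by (change 1 with (INR 1); apply le_INR; auto).
  refine (cv_eq _ _ _ (cv_ext_ev _ _ _ 0%nat _ HH) _).
  - intros n _. unfold Rdiv. ring.
  - field. lra.
Qed.

Lemma ee_lim lam k l : 0 < lam -> (1 <= k)%nat -> forall m,
  Un_cv (fun n => ee lam k l (S m) n / INR n) (INR k * x_lim (INR k / lam) (S m)).
Proof.
  intros Hl Hk.
  assert (Hk' : 1 <= INR k) by (change 1 with (INR 1); apply le_INR; auto).
  induction m as [|m IH].
  - destruct (B_bounds lam k l 1 Hl Hk) as [N0 HN0].
    set (A := fun n => aa lam k l n 1 * kap k 1 + bb lam k l n 1 * (ee lam k l 0 n + kap k 0)).
    assert (HA : Un_cv A (INR k - lam * INR 1 * INR k * 0)).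
    { refine (cv_ext_ev (fun n => INR k - lam * INR 1 * INR k * (1 / Dn lam k l n)) _ _ 0%nat _ _).
      - intros n _. unfold A, aa, bb, kap. simpl. field. pose proof (Dn_pos lam k l n Hl Hk). lra.
      - apply CV_minus; [apply cv_const|]. apply CV_mult; [apply cv_const|apply cv_invD; auto]. }
    eapply cv_eq.
    + apply (asym _ A (fun n => lam * INR 1 / Dn lam k l n) (INR k - lam * INR 1 * INR k * 0) (lam * INR 1 / (INR k + lam)) N0); auto.
      * intros n _. rewrite ee_rec. unfold A, aa. ring.
      * apply cv_nB; auto.
      * simpl. apply Rmult_le_pos; [apply Rmult_le_pos; lra|left; apply Rinv_0_lt_compat; lra].
    + unfold x_lim, gamma_ratio. simpl. field. split; [|split]; try lra.
  - destruct (B_bounds lam k l (S (S m)) Hl Hk) as [N0 HN0].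
    set (L := INR k * x_lim (INR k / lam) (S m)) in *.
    set (A := fun n => aa lam k l n (S (S m)) * kap k (S (S m)) +
                       bb lam k l n (S (S m)) * (ee lam k l (S m) n + kap k (S m))).
    set (Ai := lam * INR (S m) * (L * (1 / (INR k + lam)) + kap k (S m) * 0)).
    assert (HA : Un_cv A Ai).
    { refine (cv_ext_ev (fun n => lam * INR (S m) * ((ee lam k l (S m) n / INR n) * (INR n / Dn lam k l n)
                  + kap k (S m) * (1 / Dn lam k l n))) _ _ 1%nat _ _).
      - intros n Hn. unfold A, aa, bb. replace (S (S m) - 1)%nat with (S m) by lia.
        replace (kap k (S (S m))) with 0 by reflexivity. pose proof (Dn_pos lam k l n Hl Hk).
        assert (INR n <> 0) by (apply not_0_INR; lia). field. split; lra.
      - apply CV_mult; [apply cv_const|]. apply CV_plus.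
        + apply CV_mult; [exact IH|apply cv_nD; auto].
        + apply CV_mult; [apply cv_const|apply cv_invD; auto]. }
    eapply cv_eq.
    + apply (asym _ A (fun n => lam * INR (S (S m)) / Dn lam k l n) Ai (lam * INR (S (S m)) / (INR k + lam)) N0); auto.
      * intros n _. rewrite ee_rec. unfold A, aa. ring.
      * apply cv_nB; auto.
      * apply Rmult_le_pos; [apply Rmult_le_pos; [lra|apply pos_INR]|left; apply Rinv_0_lt_compat; lra].
    + unfold Ai, L. rewrite x_lim_rec by (apply Rdiv_lt_0_compat; lra).
      rewrite (S_INR (S m)). pose proof (pos_INR (S m)).
      assert (0 < INR k / lam) by (apply Rdiv_lt_0_compat; lra).
      field. repeat split; try lra.
      nra.
Qed.


Lemma paa_prob_Ex lam k l n E :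
  paa_prob lam k l n E = Ex (paa_dist lam k l n) (fun s => if E s then 1 else 0).
Proof.
  unfold paa_prob. generalize (paa_dist lam k l n). intro d.
  induction d as [|[s q] d IH]; [reflexivity|].
  rewrite Ex_cons. simpl. rewrite IH. destruct (E s); ring.
Qed.

Lemma squeeze (P b : nat -> R) N : (forall n, (n >= N)%nat -> 0 <= P n <= b n) ->
  Un_cv b 0 -> Un_cv P 0.
Proof.
  intros H Hb e He. destruct (Hb e He) as [M HM]. exists (max N M). intros n Hn.
  specialize (H n ltac:(lia)). specialize (HM n ltac:(lia)). unfold R_dist in *.
  rewrite Rminus_0_r in *. rewrite Rabs_right in *; lra.
Qed.

Lemma ind_bound eps T y e x : 0 < eps -> 0 < T ->
  Rabs (e / T - x) < eps / 2 ->
  (if Rlt_dec eps (Rabs (y / T - x)) then true else false) = true ->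
  1 <= 4 / (eps ^ 2 * T ^ 2) * (y - e) ^ 2.
Proof.
  intros He HT Hb Hc. destruct (Rlt_dec eps (Rabs (y / T - x))) as [Hy|]; [|discriminate].
  set (z := (y - e) / T).
  assert (Ez : z = (y / T - x) - (e / T - x)) by (unfold z; field; lra).
  assert (Hz : eps / 2 < Rabs z).
  { pose proof (Rabs_triang_inv (y / T - x) (e / T - x)). rewrite Ez. lra. }
  assert (Hz2 : (eps/2)^2 < z^2).
  { rewrite <- (pow2_abs z). nra. }
  replace ((y - e)^2) with (z^2 * T^2) by (unfold z; field; lra).
  apply (Rmult_le_reg_r (eps^2)); [nra|].
  replace (4 / (eps ^ 2 * T ^ 2) * (z ^ 2 * T ^ 2) * eps ^ 2) with (4 * z^2) by (field; lra).
  nra.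
Qed.

Lemma QQ_lin lam k l i : 0 < lam -> (1 <= k)%nat -> lam <= INR (k + l) -> (1 <= i)%nat ->
  exists N1, forall n, (n >= N1)%nat ->
    QQ lam k l i n <= QQ lam k l i N1 + lam * INR i * INR i * INR n.
Proof.
  intros Hl Hk Hkl Hi.
  destruct (B_bounds lam k l i Hl Hk) as [N1 HN1]. exists N1.
  assert (HC : 0 <= lam * INR i * INR i) by (pose proof (pos_INR i); apply Rmult_le_pos; [apply Rmult_le_pos|]; lra).
  assert (Hd : forall d, QQ lam k l i (N1 + d) <= QQ lam k l i N1 + lam * INR i * INR i * INR d).
  { induction d.
    - rewrite Nat.add_0_r. simpl. lra.
    - replace (N1 + S d)%nat with (S (N1 + d)) by lia.
      eapply Rle_trans; [apply QQ_step; auto|].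
      + destruct (HN1 (N1 + d)%nat ltac:(lia)) as [_ H1].
        pose proof (Dn_pos lam k l (N1 + d) Hl Hk).
        apply (Rmult_le_reg_r (/ Dn lam k l (N1 + d))); [apply Rinv_0_lt_compat; lra|].
        rewrite Rinv_r by lra. exact H1.
      + rewrite S_INR. lra. }
  intros n Hn. specialize (Hd (n - N1)%nat). replace (N1 + (n - N1))%nat with n in Hd by lia.
  eapply Rle_trans; [exact Hd|]. apply Rplus_le_compat_l. apply Rmult_le_compat_l; auto.
  apply le_INR; lia.
Qed.

Lemma sq_ge lam k l m n s : (Nr (S m) s - ee lam k l (S m) n)^2 <= sq lam k l (S m) n s.
Proof.
  unfold sq. change (sum1 ?f (S m)) with (sum1 f m + f (S m)). cbv beta.
  assert (0 <= sum1 (fun j => (Nr j s - ee lam k l j n) ^ 2) m) by (apply sum1_nonneg; intros; apply pow2_ge_0).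
  lra.
Qed.

Lemma final_alg F W K0 C n : 0 <= F -> 1 <= n -> 0 <= C -> W = Rabs K0 + C ->
  F / (n ^ 2) * (K0 + C * n) <= 2 * F * W * (1 / (1 * n + 1)).
Proof.
  intros HF Hn HC HW.
  assert (K0 <= Rabs K0) by apply Rle_abs.
  assert (0 <= Rabs K0) by apply Rabs_pos.
  assert (Rabs K0 * 1 <= Rabs K0 * n) by (apply Rmult_le_compat_l; lra).
  assert (HK : K0 + C * n <= W * n).
  { replace (W * n) with (Rabs K0 * n + C * n) by (rewrite HW; ring). lra. }
  apply Rle_trans with (F / n ^ 2 * (W * n)).
  { apply Rmult_le_compat_l; auto. unfold Rdiv. apply Rmult_le_pos; auto. left; apply Rinv_0_lt_compat; nra. }
  replace (F / n ^ 2 * (W * n)) with (F * W * (1 / n)) by (field; lra).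
  replace (2 * F * W * (1 / (1 * n + 1))) with (F * W * (2 / (n + 1))) by (field; lra).
  apply Rmult_le_compat_l; [nra|].
  apply (Rmult_le_reg_r (n * (n + 1))); [nra|].
  replace (1 / n * (n * (n + 1))) with (n + 1) by (field; lra).
  replace (2 / (n + 1) * (n * (n + 1))) with (2 * n) by (field; lra). lra.
Qed.

Theorem mainTheorem3 :
  forall (lam : R) (k l : nat),
    0 < lam -> (1 <= k)%nat -> lam <= INR (k + l) ->
    forall i : nat, (1 <= i)%nat ->
    forall eps : R, 0 < eps ->
      Un_cv
        (fun n => paa_prob lam k l n
           (fun s => if Rlt_dec eps
                          (Rabs (INR (num_score s i) / INR (n * k)
                                 - x_lim (INR k / lam) i))
                     then true else false))
        0.
Proof.
  intros lam k l Hl Hk Hkl i Hi eps He.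
  assert (Hk' : 1 <= INR k) by (change 1 with (INR 1); apply le_INR; auto).
  destruct (QQ_lin lam k l i Hl Hk Hkl Hi) as [N1 HN1].
  destruct i as [|m]; [lia|].
  destruct (ee_lim lam k l Hl Hk m (eps * INR k / 2)) as [N2 HN2].
  { apply Rmult_lt_0_compat; [nra|lra]. }
  set (C := lam * INR (S m) * INR (S m)).
  set (K0 := QQ lam k l (S m) N1).
  set (F := 4 / (eps ^ 2 * INR k ^ 2)).
  assert (HF : 0 <= F) by (unfold F; apply Rmult_le_pos; [lra|left; apply Rinv_0_lt_compat; apply Rmult_lt_0_compat; apply pow_lt; lra]).
  assert (HC : 0 <= C) by (unfold C; pose proof (pos_INR (S m)); apply Rmult_le_pos; [apply Rmult_le_pos|]; lra).
  apply (squeeze _ (fun n => 2 * F * (Rabs K0 + C) * (1 / (1 * INR n + 1))) (max (max N1 N2) 1)).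
  2:{ replace 0 with (2 * F * (Rabs K0 + C) * 0) by ring.
      apply CV_mult; [apply cv_const|apply cv_inv_lin; lra]. }
  intros n Hn. rewrite paa_prob_Ex.
  assert (Hn1 : 1 <= INR n) by (change 1 with (INR 1); apply le_INR; lia).
  set (T := INR n * INR k).
  assert (HT : 0 < T) by (unfold T; nra).
  split.
  { apply Ex_nonneg. intros s q Hin. destruct (paa_inv lam k l n Hl Hk Hkl s q Hin) as [Hq _].
    split; auto. destruct (Rlt_dec _ _); lra. }
  apply Rle_trans with (Ex (paa_dist lam k l n) (fun s => 4 / (eps ^ 2 * T ^ 2) * sq lam k l (S m) n s)).
  { apply Ex_mono. intros s q Hin. destruct (paa_inv lam k l n Hl Hk Hkl s q Hin) as [Hq _].
    split; auto.
    assert (HH : 0 <= 4 / (eps ^ 2 * T ^ 2)) by (apply Rmult_le_pos; [lra|left; apply Rinv_0_lt_compat; apply Rmult_lt_0_compat; apply pow_lt; lra]).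
    apply Rle_trans with (4 / (eps ^ 2 * T ^ 2) * (Nr (S m) s - ee lam k l (S m) n) ^ 2).
    2:{ apply Rmult_le_compat_l; auto. apply sq_ge. }
    destruct (Rlt_dec eps (Rabs (INR (num_score s (S m)) / INR (n * k) - x_lim (INR k / lam) (S m)))) as [Hc|Hc].
    - apply ind_bound with (x := x_lim (INR k / lam) (S m)); auto.
      + specialize (HN2 n ltac:(lia)). unfold R_dist in HN2.
        replace (ee lam k l (S m) n / T - x_lim (INR k / lam) (S m)) with
          ((ee lam k l (S m) n / INR n - INR k * x_lim (INR k / lam) (S m)) / INR k) by (unfold T; field; lra).
        unfold Rdiv at 1. rewrite Rabs_mult, (Rabs_right (/ INR k)) by (left; apply Rinv_0_lt_compat; lra).
        apply (Rmult_lt_reg_r (INR k)); [lra|]. rewrite Rmult_assoc, Rinv_l by lra.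
        replace (eps / 2 * INR k) with (eps * INR k / 2) by field. lra.
      + unfold Nr, T. rewrite <- mult_INR.
        destruct (Rlt_dec eps _); [reflexivity|contradiction].
    - apply Rmult_le_pos; auto. apply pow2_ge_0. }
  rewrite Ex_scal. fold (QQ lam k l (S m) n).
  apply Rle_trans with (4 / (eps ^ 2 * T ^ 2) * (K0 + C * INR n)).
  { apply Rmult_le_compat_l; [apply Rmult_le_pos; [lra|left; apply Rinv_0_lt_compat; apply Rmult_lt_0_compat; apply pow_lt; lra]|].
    specialize (HN1 n ltac:(lia)). unfold K0, C. lra. }
  replace (4 / (eps ^ 2 * T ^ 2)) with (F / INR n ^ 2) by (unfold F, T; field; lra).
  apply final_alg; auto.
Qed.
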